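(* Let $G$ be a proper interval graph with a proper vertex ordering $<$ and let $e,e'\in E(G)$. Then $\{e,e'\}$ is a uniquely restricted matching in $G$ if and only if $l(e),l(e')$ are distinct and nonadjacent or $r(e),r(e')$ are distinct and nonadjacent.
   Context: Graphs are finite, simple, undirected. A proper interval graph is a graph with an interval representation (closed real intervals, adjacency iff intersection for distinct vertices) in which no interval strictly contains another. An ordering $<$ of $V(G)$ is a proper vertex ordering if for all $u<v<w$, $uw\in E(G)$ implies $uv,vw\in E(G)$. For an edge $e=uv$, $l(e)=\min_<\{u,v\}$ and $r(e)=\max_<\{u,v\}$. A matching is a set of pairwise vertex-disjoint edges; it is uniquely restricted if no other matching of $G$ matches exactly the same vertex set. *)

(* Defs.v *)
From Stdlib Require Import Reals.
From mathcomp Require Import all_boot.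
Set Implicit Arguments. Unset Strict Implicit. Unset Printing Implicit Defensive.

Section Graphs.
Variable T : finType.

Definition simple_graph (e : rel T) : Prop := symmetric e /\ irreflexive e.

Definition proper_interval_graph (e : rel T) : Prop :=
  exists a b : T -> R,
    (forall v, Rle (a v) (b v)) /\
    (forall u v, u <> v ->
        (e u v <-> Rle (Rmax (a u) (a v)) (Rmin (b u) (b v)))) /\
    (forall u v, Rle (a v) (a u) -> Rle (b u) (b v) ->
        a u = a v /\ b u = b v).

(* A linear order on V(G) is encoded by an injective position map pos :
   u < v  iff  pos u < pos v. *)
Definition proper_vertex_ordering (e : rel T) (pos : T -> nat) : Prop :=
  injective pos /\
  forall u v w, pos u < pos v -> pos v < pos w -> e u w -> e u v /\ e v w.

Definition is_edge (e : rel T) (E : {set T}) : Prop :=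
  exists u v, e u v /\ E = [set u; v].

Definition matching (e : rel T) (M : {set {set T}}) : Prop :=
  (forall E, E \in M -> is_edge e E) /\
  (forall E F, E \in M -> F \in M -> E <> F -> [disjoint E & F]).

Definition uniquely_restricted_matching (e : rel T) (M : {set {set T}}) : Prop :=
  matching e M /\
  forall M', matching e M' -> cover M' = cover M -> M' = M.

End Graphs.

(* Main.v *)
Require Import Defs.
From mathcomp Require Import all_boot.
Set Implicit Arguments. Unset Strict Implicit. Unset Printing Implicit Defensive.

Section Aux.
Variable T : finType.
Variable e : rel T.

Lemma disj2 (a b c d : T) : a != c -> a != d -> b != c -> b != d ->
  [disjoint [set a; b] & [set c; d]].
Proof.
move=> ac ad bc bd; rewrite disjoint_subset; apply/subsetP => x.
rewrite !inE => /orP[]/eqP->; apply/norP; split; by [].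
Qed.

Lemma cover2 (A B : {set T}) x : (x \in cover [set A; B]) = (x \in A) || (x \in B).
Proof.
apply/bigcupP/orP => [[C HC xC]|[] H].
  by rewrite in_set2 in HC; case/orP: HC => /eqP HC; [left|right]; rewrite -HC.
  by exists A; rewrite ?in_set2 ?eqxx.
by exists B; rewrite ?in_set2 ?eqxx ?orbT.
Qed.

Lemma match2 (a b c d : T) : e a b -> e c d ->
  a != c -> a != d -> b != c -> b != d ->
  matching e [set [set a; b]; [set c; d]].
Proof.
move=> eab ecd ac ad bc bd; split.
  move=> E; rewrite in_set2 => /orP[]/eqP->; [exists a, b | exists c, d]; by [].
move=> E F; rewrite !in_set2 => /orP[]/eqP-> /orP[]/eqP-> //; move=> _.
  exact: disj2.
rewrite disjoint_sym; exact: disj2.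
Qed.

Lemma cross (M' : {set {set T}}) (x y z w : T) :
  simple_graph e -> matching e M' ->
  (forall t, t \in cover M' -> t \in [set x; y; z; w]) ->
  [set x; y] \in M' -> z \in cover M' ->
  z != x -> z != y -> e z w.
Proof.
move=> [sym irr] [Hed Hdj] Hcov Hxy /bigcupP [F HF zF] zx zy.
have FE: F <> [set x; y].
  by move=> eF; move: zF; rewrite eF in_set2 (negbTE zx) (negbTE zy).
have dj := Hdj _ _ HF Hxy FE.
have [p [q [epq eF]]] := Hed _ HF.
have pF : p \in F by rewrite eF in_set2 eqxx.
have qF : q \in F by rewrite eF in_set2 eqxx orbT.
have pc : p \in cover M' by apply/bigcupP; exists F.
have qc : q \in cover M' by apply/bigcupP; exists F.
have := disjointFr dj pF; have := disjointFr dj qF.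
rewrite !in_set2 => /norP [qx qy] /norP [px py].
move: (Hcov _ pc) (Hcov _ qc) zF epq; rewrite eF !inE (negbTE px) (negbTE py) (negbTE qx) (negbTE qy) /=.
case/orP=>/eqP-> ; case/orP=>/eqP->; rewrite ?irr //=.
by move=> _; rewrite sym.
Qed.

End Aux.

Theorem lemma3 (T : finType) (e : rel T) (pos : T -> nat)
  (Hs : simple_graph e) (Hpi : proper_interval_graph e)
  (Hord : proper_vertex_ordering e pos)
  (u1 v1 u2 v2 : T)
  (He1 : e u1 v1) (Hlr1 : pos u1 < pos v1)
  (He2 : e u2 v2) (Hlr2 : pos u2 < pos v2)
  (Hne : [set u1; v1] <> [set u2; v2]) :
  uniquely_restricted_matching e [set [set u1; v1]; [set u2; v2]] <->
  ((u1 <> u2 /\ ~~ e u1 u2) \/ (v1 <> v2 /\ ~~ e v1 v2)).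
Proof.
have [sym irr] := Hs; have [inj o3] := Hord.
have d11 : u1 != v1 by apply/eqP => h; rewrite h ltnn in Hlr1.
have d22 : u2 != v2 by apply/eqP => h; rewrite h ltnn in Hlr2.
split.
  move=> [[Hed Hdj] Huniq].
  have dj := Hdj _ _ (setU11 _ _) (setU1r _ (set11 _)) Hne.
  have := disjointFr dj (setU11 _ _); have := disjointFr dj (setU1r _ (set11 _)).
  rewrite !in_set2 => /norP [a b] /norP [c d].
  case E12: (e u1 u2); last by left; split=> //; apply/eqP.
  case E34: (e v1 v2); last by right; split=> //; apply/eqP.
  exfalso.
  have HM' : matching e [set [set u1; u2]; [set v1; v2]].
    by apply: match2 => //; rewrite eq_sym.
  have := Huniq _ HM'.
  have -> : cover [set [set u1; u2]; [set v1; v2]] = cover [set [set u1; v1]; [set u2; v2]].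
    apply/setP => t; rewrite !cover2 !in_set2.
    by case: (t == u1); case: (t == u2); case: (t == v1); case: (t == v2).
  move=> /(_ erefl) eM.
  have : [set u1; u2] \in [set [set u1; v1]; [set u2; v2]] by rewrite -eM setU11.
  rewrite in_set2 => /orP[]/eqP eA.
    have : u2 \in [set u1; v1] by rewrite -eA in_set2 eqxx orbT.
    by rewrite in_set2 eq_sym (negbTE c) eq_sym (negbTE a).
  have : u1 \in [set u2; v2] by rewrite -eA in_set2 eqxx.
  by rewrite in_set2 (negbTE c) (negbTE d).
move=> H.
have neqpos : forall x y, x != y -> pos x != pos y.
  by move=> x y /eqP nxy; apply/eqP => /inj.
have d12 : u1 != u2.
  apply/eqP => h; subst u2.
  have hv : v1 != v2 by apply/eqP => h; apply: Hne; rewrite h.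
  case: H => [[//]|[_ /negP]]; apply.
  case: (ltngtP (pos v1) (pos v2)) => h.
  - exact: (o3 _ _ _ Hlr1 h He2).2.
  - by rewrite sym; exact: (o3 _ _ _ Hlr2 h He1).2.
  - by move: (neqpos _ _ hv); rewrite h eqxx.
have d34 : v1 != v2.
  apply/eqP => h; subst v2.
  case: H => [[_ /negP]|[//]]; apply.
  case: (ltngtP (pos u1) (pos u2)) => h.
  - exact: (o3 _ _ _ h Hlr2 He1).1.
  - by rewrite sym; exact: (o3 _ _ _ h Hlr1 He2).1.
  - by move: (neqpos _ _ d12); rewrite h eqxx.
have d14 : u1 != v2.
  apply/eqP => h; subst v2.
  by case: H => [[_ /negP]|[_ /negP]]; apply; rewrite sym.
have d32 : v1 != u2.
  apply/eqP => h; subst u2.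
  by case: H => [[_ /negP]|[_ /negP]]; apply; first [done | rewrite sym].
have F1 : ~ (e u1 u2 /\ e v1 v2).
  by case=> a b; case: H => [[_ /negP]|[_ /negP]]; apply.
have F2 : ~ (e u1 v2 /\ e v1 u2).
  case=> a b; have b' : e u2 v1 by rewrite sym.
  apply: F1.
  case: (ltngtP (pos u1) (pos u2)) => h.
  - split; first exact: (o3 _ _ _ h Hlr2 a).1.
    case: (ltngtP (pos v1) (pos v2)) => h'.
    + exact: (o3 _ _ _ Hlr1 h' a).2.
    + by rewrite sym; exact: (o3 _ _ _ Hlr2 h' b' ).2.
    + by move: (neqpos _ _ d34); rewrite h' eqxx.
  - split; first by rewrite sym; exact: (o3 _ _ _ h Hlr1 b').1.
    case: (ltngtP (pos v1) (pos v2)) => h'.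
    + exact: (o3 _ _ _ Hlr1 h' a).2.
    + by rewrite sym; exact: (o3 _ _ _ Hlr2 h' b').2.
    + by move: (neqpos _ _ d34); rewrite h' eqxx.
  - by move: (neqpos _ _ d12); rewrite h eqxx.
have HM : matching e [set [set u1; v1]; [set u2; v2]] by apply: match2.
split=> // M' HM' Hcov.
have Hcov' : forall t, t \in cover M' -> t \in [set u1; v1; u2; v2].
  by move=> t; rewrite Hcov cover2 !inE -!orbA.
have c1 : u1 \in cover M' by rewrite Hcov cover2 !inE eqxx.
have c2 : v1 \in cover M' by rewrite Hcov cover2 !inE eqxx !orbT.
have c3 : u2 \in cover M' by rewrite Hcov cover2 !inE eqxx !orbT.
have c4 : v2 \in cover M' by rewrite Hcov cover2 !inE eqxx !orbT.
have perm : forall x y z w, [set u1; v1; u2; v2] \subset [set x; y; z; w] ->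
    forall t, t \in cover M' -> t \in [set x; y; z; w].
  by move=> x y z w /subsetP sub t /Hcov' /sub.
have sub : M' \subset [set [set u1; v1]; [set u2; v2]].
{   apply/subsetP => E HE.
  have [x [y [exy Ex]]] := HM'.1 _ HE.
  have xc : x \in cover M' by apply/bigcupP; exists E; rewrite // Ex in_set2 eqxx.
  have yc : y \in cover M' by apply/bigcupP; exists E; rewrite // Ex in_set2 eqxx orbT.
  rewrite Ex in HE *.
  move: (Hcov' x xc) (Hcov' y yc) exy HE; rewrite !inE.
  case/orP=>[/orP[/orP[/eqP->|/eqP->]|/eqP->]|/eqP->]; case/orP=>[/orP[/orP[/eqP->|/eqP->]|/eqP->]|/eqP->] => exy HE; rewrite ?irr // in exy.
  all: try by rewrite !inE !eqxx ?orbT.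
  all: try by apply/orP; (left + right); apply/eqP/setP => t; rewrite !inE orbC.
  all: exfalso.
  all: try first [ (have ew : e v1 v2 by apply: (cross (z:=v1) (w:=v2) Hs HM' _ HE); first [done | (rewrite eq_sym; done) | (apply: perm; apply/subsetP => t; rewrite !inE => /orP[/orP[/orP[]|]|] /eqP ->; by rewrite eqxx !(orbT, orTb))]) | (have ew : e v1 u2 by apply: (cross (z:=v1) (w:=u2) Hs HM' _ HE); first [done | (rewrite eq_sym; done) | (apply: perm; apply/subsetP => t; rewrite !inE => /orP[/orP[/orP[]|]|] /eqP ->; by rewrite eqxx !(orbT, orTb))]) | (have ew : e u1 v2 by apply: (cross (z:=u1) (w:=v2) Hs HM' _ HE); first [done | (rewrite eq_sym; done) | (apply: perm; apply/subsetP => t; rewrite !inE => /orP[/orP[/orP[]|]|] /eqP ->; by rewrite eqxx !(orbT, orTb))]) | (have ew : e u1 u2 by apply: (cross (z:=u1) (w:=u2) Hs HM' _ HE); first [done | (rewrite eq_sym; done) | (apply: perm; apply/subsetP => t; rewrite !inE => /orP[/orP[/orP[]|]|] /eqP ->; by rewrite eqxx !(orbT, orTb))]) ].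
  all: try first [ (by apply: F1; split; first [done | (rewrite sym; done)]) | (by apply: F2; split; first [done | (rewrite sym; done)]) ]. }
apply/eqP; rewrite eqEsubset sub /=.
apply/subsetP => E; rewrite in_set2 => /orP[]/eqP->.
  case/bigcupP: c1 => F HF uF.
  move/subsetP: sub => /(_ _ HF); rewrite in_set2 => /orP[]/eqP eF; first by rewrite -eF.
  by move: uF; rewrite eF in_set2 (negbTE d12) (negbTE d14).
case/bigcupP: c3 => F HF uF.
move/subsetP: sub => /(_ _ HF); rewrite in_set2 => /orP[]/eqP eF; last by rewrite -eF.
by move: uF; rewrite eF in_set2 eq_sym (negbTE d12) eq_sym (negbTE d32).
Qed.
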